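(* Let $X$ be a real Hilbert space and $Y$ a real Banach space. Let $F\colon X\to Y$ be a continuous function and let $L>0$, and suppose that for every $n\ge 1$, all $x_1,\ldots,x_n \in X$ and all $\lambda_1,\ldots,\lambda_n \ge 0$ with $\sum_{i=1}^n \lambda_i = 1$, $$\Big\| F\Big(\sum_{i=1}^n \lambda_i x_i\Big) - \sum_{i=1}^n \lambda_i F(x_i)\Big\| \le \frac{L}{2}\sum_{1\le i<j\le n} \lambda_i\lambda_j \|x_i - x_j\|^2.$$ For each $y^*\in Y^*$ define $\phi_{y^*}\colon X\to\mathbb{R}$ by $\phi_{y^*}(x) = y^*(F(x))$. Then for each $y^*\in Y^*$ with $\|y^*\|\le 1$, the function $\phi_{y^*}$ is Fréchet differentiable everywhere on $X$ and its gradient $\nabla\phi_{y^*}\colon X\to X$ is $L$-Lipschitz continuous.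
   Context: $Y^*$ denotes the (continuous) dual space of $Y$ with the dual norm. The gradient $\nabla\phi_{y^*}(x)\in X$ is the Riesz representative of the Fréchet derivative of $\phi_{y^*}$ at $x$. *)

(* Defs.v *)
From HB Require Import structures.
From mathcomp Require Import all_boot all_order all_algebra.
From mathcomp Require Import all_classical all_reals all_analysis.
Set Implicit Arguments. Unset Strict Implicit. Unset Printing Implicit Defensive.
Import Order.TTheory GRing.Theory Num.Theory.
Import numFieldNormedType.Exports.
Local Open Scope ring_scope.

(* [hilbert_inner ip] : ip is a (real) inner product on X inducing the norm
   of X.  A real Hilbert space is then a complete normed space
   (completeNormedModType) equipped with such an inner product. *)
Definition hilbert_inner (R : realType) (X : normedModType R)
  (ip : X -> X -> R) : Prop :=
  [/\ (forall x y, ip x y = ip y x),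
      (forall a x y z, ip (a *: x + y) z = a * ip x z + ip y z)
    & (forall x, ip x x = `|x| ^+ 2)].

Definition dual_elt (R : realType) (Y : normedModType R) (ys : Y -> R) : Prop :=
  (forall a u v, ys (a *: u + v) = a * ys u + ys v) /\ continuous ys.

Definition dual_norm_le1 (R : realType) (Y : normedModType R) (ys : Y -> R) : Prop :=
  forall y, `|ys y| <= `|y|.

(* Main.v *)
Require Import Defs.
From HB Require Import structures.
From mathcomp Require Import all_boot all_order all_algebra.
From mathcomp Require Import all_classical all_reals all_analysis.
From mathcomp Require Import ring lra.
Import Order.TTheory GRing.Theory Num.Theory.
Import numFieldNormedType.Exports.
Local Open Scope ring_scope.
Set Implicit Arguments. Unset Strict Implicit. Unset Printing Implicit Defensive.

Lemma ip_lin (R : realType) (X : normedModType R) (ip : X -> X -> R) :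
  hilbert_inner ip ->
  [/\ forall x y z, ip (x + y) z = ip x z + ip y z,
      forall x y z, ip z (x + y) = ip z x + ip z y,
      forall a x z, ip (a *: x) z = a * ip x z,
      forall a x z, ip z (a *: x) = a * ip z x &
   [/\ forall x z, ip (- x) z = - ip x z,
       forall x z, ip z (- x) = - ip z x,
       forall z, ip 0 z = 0 & forall z, ip z 0 = 0]].
Proof.
move=> hip; have [hs hl hn] := hip.
have hD x y z : ip (x + y) z = ip x z + ip y z by have := hl 1 x y z; rewrite scale1r mul1r.
have h0 z : ip 0 z = 0.
  by have := hD 0 0 z; rewrite addr0; lra.
have hZ a x z : ip (a *: x) z = a * ip x z by rewrite -[_ *: _]addr0 hl h0 addr0.
have hN x z : ip (- x) z = - ip x z by rewrite -scaleN1r hZ mulN1r.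
split=> //.
- by move=> x y z; rewrite hs hD (hs x) (hs y).
- by move=> a x z; rewrite hs hZ hs.
- split=> //; first by move=> x z; rewrite hs hN hs.
  by move=> z; rewrite hs h0.
Qed.

Lemma ip_cs (R : realType) (X : normedModType R) (ip : X -> X -> R) :
  hilbert_inner ip -> forall x y, `|ip x y| <= `|x| * `|y|.
Proof.
move=> hip x y; have [hs hl hn] := hip; have [hD hDr hZ hZr [hN hNr h0 h0r]] := ip_lin hip.
have key : forall t : R, 0 < t -> `|ip x y| <= (t * `|x|^+2 + t^-1 * `|y|^+2) / 2.
  move=> t t0.
  have e1 : 0 <= ip (t *: x - y) (t *: x - y) by rewrite hn.
  have e2 : 0 <= ip (t *: x + y) (t *: x + y) by rewrite hn.
  rewrite hD hN !hDr !hNr !hZ !hZr !hn (hs y x) in e1.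
  rewrite hD !hDr !hZ !hZr !hn (hs y x) in e2.
  have tt : t * t^-1 = 1 by rewrite mulfV // gt_eqF.
  have ti : 0 < t^-1 by rewrite invr_gt0.
  have tn : t != 0 by rewrite gt_eqF.
  have f2 := mulr_ge0 (ltW ti) e2; have f1 := mulr_ge0 (ltW ti) e1.
  have E2 : t^-1 * (t * (t * `|x| ^+ 2) + t * ip x y + (t * ip x y + `|y| ^+ 2))
     = t * `|x| ^+ 2 + 2 * ip x y + t^-1 * `|y| ^+ 2 by field.
  have E1 : t^-1 * (t * (t * `|x| ^+ 2) - t * ip x y - (t * ip x y - `|y| ^+ 2))
     = t * `|x| ^+ 2 - 2 * ip x y + t^-1 * `|y| ^+ 2 by field.
  rewrite E2 in f2; rewrite E1 in f1.
  rewrite ler_norml; apply/andP; split; lra.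
have [->|xn0] := eqVneq x 0; first by rewrite h0 !normr0 mul0r.
have [->|yn0] := eqVneq y 0; first by rewrite h0r !normr0 mulr0.
have nx : 0 < `|x| by rewrite normr_gt0.
have ny : 0 < `|y| by rewrite normr_gt0.
apply: le_trans (key (`|y| / `|x|) (divr_gt0 ny nx)) _.
rewrite invf_div le_eqVlt; apply/orP; left; apply/eqP; field; rewrite ?gt_eqF //.
Qed.

Lemma diff_quad (R : realType) (V : normedModType R) (f l : V -> R) x (C M : R) :
  0 <= C -> 0 <= M ->
  (forall a u v, l (a *: u + v) = a * l u + l v) ->
  (forall v, `|l v| <= M * `|v|) ->
  (forall h, `|f (x + h) - f x - l h| <= C * `|h| ^+ 2) ->
  differentiable f x /\ forall h, 'd f x h = l h.
Proof.
move=> C0 M0 ll lM lq.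
pose df : {linear V -> R} := HB.pack l (GRing.isLinear.Build R V R *:%R l ll).
have dfc : continuous df.
  apply/bounded_linear_continuous/linear_boundedP; near=> r; move=> v.
  apply: le_trans (lM v) _; apply: ler_wpM2r => //.
have dfo : f \o shift x = cst (f x) + df +o_ 0 id.
  apply/eqaddoP => e e0; near=> h.
  rewrite !fctE /shift /cst /= [h + x]addrC.
  have -> : f (x + h) - (f x + l h) = f (x + h) - f x - l h by rewrite opprD addrA.
  apply: le_trans (lq h) _; rewrite expr2 mulrA ler_wpM2r //.
  near: h; apply/nbhs_normP; exists (e / (C + 1)).
    by rewrite /=; apply: divr_gt0 => //; lra.
  move=> h /=; rewrite sub0r normrN => hh.
  apply: (@le_trans _ _ ((C + 1) * `|h|)); first by rewrite ler_wpM2r // lerDl.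
  by rewrite mulrC -ler_pdivlMr ?ltW // ?ltr_pwDr.
have dd := diff_unique dfc dfo.
split; last by move=> h; rewrite dd.
by apply/diff_locallyP; rewrite dd; split.
Unshelve. all: by end_near. Qed.

Lemma small_le0 (R : realType) (c K : R) :
  (forall n : nat, c <= K / n.+1%:R) -> c <= 0.
Proof.
move=> H; rewrite leNgt; apply/negP => c0.
have K0 : 0 <= K by have := H 0%N; rewrite divr1 => ?; lra.
have := @archi_boundP _ (K / c) (divr_ge0 K0 (ltW c0)).
set n := Num.bound _ => hn.
have := H n; rewrite ler_pdivlMr ?ltr0Sn // => h2.
rewrite ltr_pdivrMr // in hn.
have : (n%:R : R) < n.+1%:R by rewrite ltr_nat.
nra.
Qed.

Lemma small_eq0 (R : realType) (c K : R) :
  (forall n : nat, `|c| <= K / n.+1%:R) -> c = 0.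
Proof. by move=> H; apply/normr0_eq0/le_anti; rewrite normr_ge0 andbT; apply: small_le0 H. Qed.

Local Open Scope classical_set_scope.
Lemma cauchy_lim (R : realType) (V : completeNormedModType R) (v : nat -> V) (C : R) :
  0 <= C -> (forall n k, (n <= k)%N -> `|v n - v k| <= C / n.+1%:R) ->
  exists u, forall n, `|v n - u| <= C / n.+1%:R.
Proof.
move=> C0 H.
have cv : cvg (v @ \oo).
  apply/cauchy_cvgP/cauchy_exP => e e0.
  have := @archi_boundP _ (C / e) (divr_ge0 C0 (ltW e0)).
  set N := Num.bound _ => hN.
  exists (v N); exists N => // k /= hk.
  rewrite -ball_normE /=; apply: le_lt_trans (H _ _ hk) _.
  rewrite ltr_pdivrMr ?ltr0Sn // mulrC -ltr_pdivrMr //.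
  by apply: lt_le_trans hN _; rewrite ler_nat.
exists (lim (v @ \oo)) => n.
apply/ler_addgt0Pr => e e0.
have h1 : \forall k \near \oo, `|lim (v @ \oo) - v k| <= e by apply: cvgr_dist_le.
have h2 : \forall k \near \oo, (n <= k)%N by exists n.
have [k [hk1 hk2]] := filter_ex (proj2 (near_andP _ _ _) (conj h1 h2)).
apply: le_trans (ler_distD (v k) _ _) _.
by rewrite lerD // ?H // distrC.
Qed.

Lemma riesz (R : realType) (X : completeNormedModType R) (ip : X -> X -> R) :
  hilbert_inner ip -> forall (l : X -> R) (M : R), 0 <= M ->
  (forall a u v, l (a *: u + v) = a * l u + l v) ->
  (forall v, `|l v| <= M * `|v|) -> exists u, forall h, ip u h = l h.
Proof.
move=> hip l M M0 ll lM.
have [hs hl hn] := hip; have [hD hDr hZ hZr [hN hNr h0 h0r]] := ip_lin hip.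
have lD u v : l (u + v) = l u + l v by rewrite -[u]scale1r ll mul1r scale1r.
have l0 : l 0 = 0.
  have := ll 1 0 0; rewrite scale1r addr0 mul1r => h.
  by apply: (@addrI _ (l 0)); rewrite addr0 -h.
have lZ a u : l (a *: u) = a * l u by rewrite -[a *: u]addr0 ll l0 addr0.
pose J := fun v => `|v|^+2/2 - l v.
have Jlb v : - M^+2/2 <= J v.
  have := lM v; rewrite /J ler_norml => /andP [_ h]; have := sqr_ge0 (`|v| - M); nra.
pose S := [set J v | v in [set: X]].
have hinf : has_inf S.
  split; first by exists (J 0); exists 0.
  by exists (- M^+2/2) => _ [v _ <-].
set m := inf S.
have mle v : m <= J v by apply: (ge_inf hinf.2); exists v.
pose e (n : nat) : R := (n.+1%:R)^-1.
have e0 n : 0 < e n by rewrite /e invr_gt0 ltr0Sn.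
have e1 n : e n <= 1 by rewrite /e invf_le1 ?ltr0Sn // ler1n.
have emon n k : (n <= k)%N -> e k <= e n.
  by move=> nk; rewrite /e lef_pV2 ?posrE ?ltr0Sn // ler_nat.
have ex n : exists v, J v < m + e n ^+ 2.
  have [_ [v _ <-] hv] := inf_adherent (exprn_gt0 2 (e0 n)) hinf.
  by exists v.
have [v hv] := boolp.choice ex.
have parl a b : `|a - b|^+2 = 4 * (J a + J b - 2 * J (2^-1 *: (a + b))).
  rewrite /J -!hn lZ lD !(hD, hDr, hN, hNr, hZ, hZr) (hs b a).
  by field.
have cv n k : (n <= k)%N -> `|v n - v k| <= 3 / n.+1%:R.
  move=> nk; have p := parl (v n) (v k).
  have := mle (2^-1 *: (v n + v k)); have := hv n; have := hv k.
  have := emon _ _ nk; have := e0 k; have := e0 n; have := e1 n.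
  have := normr_ge0 (v n - v k).
  rewrite -/(e n) -[3 / _]/(3 * e n).
  nra.
have [u hu] := cauchy_lim (ler0n _ 3) cv.
exists u => h.
set c := ip u h - l h.
have key t : 0 <= t * c + t^+2 * `|h|^+2 / 2.
  rewrite -[_ + _]opprK oppr_ge0.
  apply: (@small_le0 _ _ (1 + 3 * `|t| * `|h|)) => n.
  have h1 := mle (v n + t *: h).
  have h2 := hv n.
  have h3 : `|ip (v n - u) h| <= 3 * e n * `|h|.
    apply: le_trans (ip_cs hip _ _) _; rewrite ler_wpM2r //; exact: hu.
  have h4 : J (v n + t *: h) - J (v n) = t * (ip (v n) h - l h) + t^+2 * `|h|^+2 / 2.
    by rewrite /J -!hn lD lZ !(hD, hDr, hN, hNr, hZ, hZr) (hs h (v n)); field.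
  rewrite hD hN in h3.
  have h5 : `|t * (ip (v n) h - ip u h)| <= `|t| * (3 * e n * `|h|).
    by rewrite normrM ler_wpM2l.
  rewrite ler_norml in h5; case/andP: h5 => h5 h6.
  rewrite -/(e n).
  have := e1 n; have := e0 n; have := normr_ge0 t; have := normr_ge0 h.
  rewrite /c; nra.
pose s := (`|h|^+2 + 1)^-1.
have s0 : 0 < s by rewrite invr_gt0; have := sqr_ge0 `|h|; lra.
have sH : s * (`|h|^+2 + 1) = 1 by rewrite mulVf //; have := sqr_ge0 `|h|; lra.
have := key (- c * s).
have := sqr_ge0 `|h|.
move=> H1 H2.
have : c ^+ 2 * s <= 0 by nra.
move=> H3; have c2 : c ^+ 2 <= 0 by nra.
have cc : c = 0 by apply/eqP; rewrite -sqrf_eq0 eq_le c2 sqr_ge0.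
by apply/eqP; rewrite -subr_eq0 -/c cc.
Qed.

Local Close Scope classical_set_scope.

Lemma comb_id (R : comRingType) (V : lmodType R) (x u w : V) (lam t : R) :
  lam *: (x + t *: u) + (1 - lam) *: (x + t *: w) = x + t *: (lam *: u + (1 - lam) *: w).
Proof.
rewrite !scalerDr !scalerA [lam * t]mulrC [(1 - lam) * t]mulrC -!scalerA.
rewrite addrACA -scalerDl [lam + _]addrC subrK scale1r.
by [].
Qed.

Lemma t_le (R : realType) (n : nat) : ((2:R)^-1)^+n <= (n.+1%:R)^-1.
Proof.
rewrite exprVn lef_pV2 ?posrE ?exprn_gt0 ?ltr0Sn //.
by rewrite -natrX ler_nat; apply: ltn_expl.
Qed.

Lemma deriv_exists (R : realType) (X : normedModType R) (f : X -> R) (L : R) (x : X) :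
  0 <= L -> {for x, continuous f} ->
  (forall (p q : X) (lam : R), 0 <= lam <= 1 ->
     `|f (lam *: p + (1 - lam) *: q) - (lam * f p + (1 - lam) * f q)|
       <= L / 2 * (lam * (1 - lam) * `|p - q| ^+ 2)) ->
  exists l : X -> R,
    [/\ forall a u v, l (a *: u + v) = a * l u + l v,
        exists M, 0 <= M /\ forall v, `|l v| <= M * `|v|
      & forall h, `|f (x + h) - f x - l h| <= L / 2 * `|h| ^+ 2].
Proof.
move=> L0 fc hc.
pose t (n : nat) : R := (2^-1)^+n.
have t0 n : 0 < t n by rewrite /t exprn_gt0 // invr_gt0.
have tS n : t n.+1 = t n / 2 by rewrite /t exprSr.
have tle n : t n <= (n.+1%:R)^-1 by apply: t_le.
pose a n h := (f (x + t n *: h) - f x) / t n.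
have inc n h : `|a n.+1 h - a n h| <= L / 2 * `|h| ^+ 2 * (t n - t n.+1).
  have := hc x (x + t n *: h) (2^-1).
  have -> : 2^-1 *: x + (1 - 2^-1) *: (x + t n *: h) = x + t n.+1 *: h.
    have := comb_id x 0 h (2^-1) (t n); rewrite !scaler0 !addr0 add0r => ->.
    by rewrite scalerA tS; congr (_ + _ *: _); field.
  have -> : x - (x + t n *: h) = - (t n *: h) by rewrite opprD addrA subrr add0r.
  rewrite normrN normrZ gtr0_norm // => H.
  have Hp : 0 <= (2^-1 : R) <= 1 by apply/andP; split; lra.
  move: (H Hp) => {H Hp} H.
  rewrite /a tS.
  have tn := t0 n.
  have E : (f (x + t n / 2 *: h) - f x) / (t n / 2) - (f (x + t n *: h) - f x) / t n
     = (f (x + t n / 2 *: h) - (2^-1 * f x + (1 - 2^-1) * f (x + t n *: h))) * (2 / t n).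
    by field; rewrite gt_eqF.
  rewrite E normrM (gtr0_norm (divr_gt0 _ tn)) //.
  have E2 : L / 2 * `|h| ^+ 2 * (t n - t n / 2) = L / 2 * (2^-1 * (1 - 2^-1) * (t n * `|h|) ^+ 2) * (2 / t n).
    by field; rewrite gt_eqF.
  rewrite E2; apply: ler_wpM2r; [apply: divr_ge0 => //; exact: ltW | by rewrite -tS].
have incs n k h : `|a (n + k)%N h - a n h| <= L / 2 * `|h| ^+ 2 * (t n - t (n + k)%N).
  elim: k => [|k IH]; first by rewrite addn0 !subrr normr0 mulr0.
  rewrite addnS; apply: le_trans (ler_distD (a (n + k)%N h) _ _) _.
  have := inc (n + k)%N h; have := normr_ge0 h.
  set A := L / 2 * `|h| ^+ 2.
  have : 0 <= A by rewrite /A mulr_ge0 // divr_ge0.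
  move=> A0 _ H1; rewrite [X in _ <= X](_ : _ = A * (t (n + k)%N - t (n + k).+1) + A * (t n - t (n + k)%N)); last by ring.
  by rewrite lerD // distrC.
have cau h n k : (n <= k)%N -> `|a n h - a k h| <= L / 2 * `|h| ^+ 2 / n.+1%:R.
  move=> nk; rewrite -(subnKC nk) distrC.
  apply: le_trans (incs _ _ h) _.
  apply: ler_wpM2l; first by rewrite mulr_ge0 ?divr_ge0.
  apply: le_trans (tle n); have := t0 (n + (k - n))%N; lra.
have exD h : exists d, forall n, `|a n h - d| <= L / 2 * `|h| ^+ 2 / n.+1%:R.
  apply: (@cauchy_lim R R^o (fun n => a n h)); last exact: cau.
  by rewrite mulr_ge0 ?divr_ge0.
have [D hD] := boolp.choice exD.
have a0 n : a n 0 = 0 by rewrite /a scaler0 addr0 subrr mul0r.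
have D0 : D 0 = 0.
  apply: (@small_eq0 _ _ 0) => n; have := hD 0 n.
  by rewrite a0 sub0r normrN normr0 expr0n /= mulr0 mul0r.
have conv u w lam : 0 <= lam <= 1 ->
    D (lam *: u + (1 - lam) *: w) = lam * D u + (1 - lam) * D w.
  move=> hl; apply/eqP; rewrite -subr_eq0; apply/eqP.
  set c := lam *: u + (1 - lam) *: w.
  apply: (@small_eq0 _ _ (L / 2 * (`|c| ^+ 2 + `|u| ^+ 2 + `|w| ^+ 2 + `|u - w| ^+ 2))) => n.
  have e1 := hD c n; have e2 := hD u n; have e3 := hD w n.
  have e4 : `|a n c - (lam * a n u + (1 - lam) * a n w)| <= L / 2 * `|u - w| ^+ 2 / n.+1%:R.
    have := hc (x + t n *: u) (x + t n *: w) lam hl.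
    rewrite comb_id -/c.
    have -> : (x + t n *: u) - (x + t n *: w) = t n *: (u - w).
      by rewrite opprD addrACA subrr add0r scalerBr.
    rewrite normrZ gtr0_norm //.
    have tn := t0 n.
    have E : a n c - (lam * a n u + (1 - lam) * a n w) = (f (x + t n *: c) -
       (lam * f (x + t n *: u) + (1 - lam) * f (x + t n *: w))) / t n.
      by rewrite /a; field; rewrite gt_eqF.
    rewrite E normrM normfV (gtr0_norm tn) => H.
    rewrite ler_pdivrMr //; apply: le_trans H _.
    have := tle n; set I := (n.+1%:R)^-1; set T := t n => TI.
    set q := `|u - w|.
    have q0 : 0 <= q by apply: normr_ge0.
    case/andP: hl => hl1 hl2.
    have l1 : lam * (1 - lam) <= 1 by nra.
    have l0 : 0 <= lam * (1 - lam) by nra.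
    rewrite [X in _ <= X](_ : _ = L / 2 * (q ^+ 2 * I * T)); last by ring.
    apply: ler_wpM2l; first by rewrite divr_ge0.
    have h1 : lam * (1 - lam) * (T * q) ^+ 2 <= (T * q) ^+ 2.
      by rewrite -[X in _ <= X]mul1r ler_wpM2r // sqr_ge0.
    apply: le_trans h1 _.
    have h2 : 0 <= T * q ^+ 2 by apply: mulr_ge0; [exact: ltW | exact: sqr_ge0].
    have : T * q ^+ 2 * T <= T * q ^+ 2 * I by apply: ler_wpM2l.
    rewrite exprMn; nra.
  have hl1 : 0 <= lam by case/andP: hl.
  have hl2 : 0 <= 1 - lam by case/andP: hl => _; rewrite subr_ge0.
  have hl3 : lam <= 1 by case/andP: hl.
  have hl4 : 1 - lam <= 1 by lra.
  have f2 : `|lam * (a n u - D u)| <= L / 2 * `|u| ^+ 2 / n.+1%:R.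
    rewrite normrM ger0_norm //; apply: le_trans e2.
    by rewrite ler_piMl.
  have f3 : `|(1 - lam) * (a n w - D w)| <= L / 2 * `|w| ^+ 2 / n.+1%:R.
    rewrite normrM ger0_norm //; apply: le_trans e3.
    by rewrite ler_piMl.
  rewrite distrC in e1.
  have -> : D c - (lam * D u + (1 - lam) * D w) = (D c - a n c) + lam * (a n u - D u)
     + (1 - lam) * (a n w - D w) + (a n c - (lam * a n u + (1 - lam) * a n w)) by ring.
  have -> : L / 2 * (`|c| ^+ 2 + `|u| ^+ 2 + `|w| ^+ 2 + `|u - w| ^+ 2) / n.+1%:R =
    L / 2 * `|c| ^+ 2 / n.+1%:R + L / 2 * `|u| ^+ 2 / n.+1%:R + L / 2 * `|w| ^+ 2 / n.+1%:R
    + L / 2 * `|u - w| ^+ 2 / n.+1%:R by ring.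
  apply: le_trans (ler_normD _ _) _; apply: lerD => //.
  apply: le_trans (ler_normD _ _) _; apply: lerD => //.
  by apply: le_trans (ler_normD _ _) _; apply: lerD.
have h01 c u : 0 <= c <= 1 -> D (c *: u) = c * D u.
  by move=> hc01; have := conv u 0 c hc01; rewrite scaler0 addr0 D0 mulr0 addr0.
have half : 0 <= (2^-1 : R) <= 1 by apply/andP; split; lra.
have hN u : D (- u) = - D u.
  have := conv u (- u) _ half.
  have -> : 2^-1 *: u + (1 - 2^-1) *: - u = 0.
    by rewrite scalerN (_ : 1 - 2^-1 = 2^-1 :> R) ?subrr //; field.
  by rewrite D0 => /eqP; rewrite eq_sym (_ : 1 - 2^-1 = 2^-1 :> R); [move=> h; lra | field].
have hpos c u : 0 <= c -> D (c *: u) = c * D u.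
  move=> c0; have [c1|c1] := lerP c 1; first by apply: h01; rewrite c0 c1.
  have cn : c != 0 by rewrite gt_eqF // (lt_trans ltr01).
  have ci : 0 <= c^-1 <= 1.
    by rewrite invr_ge0 c0 /= invf_le1 ?ltW // (lt_trans ltr01).
  have := h01 _ (c *: u) ci; rewrite scalerA mulVf // scale1r => ->.
  by rewrite mulrA mulfV // mul1r.
have hZ c u : D (c *: u) = c * D u.
  have [c0|c0] := lerP 0 c; first exact: hpos.
  rewrite -[c]opprK scaleNr hN hpos; last by rewrite oppr_ge0 ltW.
  by rewrite !mulNr !opprK.
have hAdd u v : D (u + v) = D u + D v.
  have := conv u v _ half; rewrite (_ : 1 - 2^-1 = 2^-1 :> R); last by field.
  rewrite -scalerDr hZ => h.
  have : D (u + v) = 2 * (2^-1 * D (u + v)) by field.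
  by rewrite h; move=> ->; field.
have lin : forall a u v, D (a *: u + v) = a * D u + D v by move=> c u v; rewrite hAdd hZ.
have quad h : `|f (x + h) - f x - D h| <= L / 2 * `|h| ^+ 2.
  have := hD h 0%N; rewrite /a /t expr0 scale1r divr1 divr1 //.
exists D; split => //.
have : \forall y \near x, `|f x - f y| < 1 by apply: cvgr_dist_lt.
case/nbhs_normP => del /= del0 Hdel.
set r := del / 2.
have r0 : 0 < r by rewrite /r divr_gt0.
exists ((1 + L / 2 * r ^+ 2) / r); split.
  have hh : 0 <= L / 2 * r ^+ 2 by apply: mulr_ge0; [apply: divr_ge0 | apply: sqr_ge0].
  by apply: divr_ge0; [lra | exact: ltW].
move=> v; have [->|vn0] := eqVneq v 0; first by rewrite D0 !normr0 mulr0.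
have nv : 0 < `|v| by rewrite normr_gt0.
pose w := (r / `|v|) *: v.
have nw : `|w| = r by rewrite normrZ ger0_norm ?divr_ge0 ?ltW // divfK // gt_eqF.
have fw : `|f (x + w) - f x| < 1.
  rewrite distrC; apply: (Hdel (x + w)) => /=.
  by rewrite opprD addrA subrr sub0r normrN nw /r ltr_pdivrMr // ltr_pMr // ltr1n.
have Dw : `|D w| <= 1 + L / 2 * r ^+ 2.
  have := quad w; rewrite nw => q.
  have := ler_distD (f (x + w) - f x) 0 (D w).
  rewrite sub0r normrN distrC (_ : f (x + w) - f x - D w = f (x + w) - f x - D w) // => h.
  have := ltW fw; rewrite subr0 in h; lra.
have : D w = (r / `|v|) * D v by rewrite hZ.
move=> Dwv; rewrite Dwv normrM (ger0_norm (divr_ge0 (ltW r0) (ltW nv))) in Dw.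
rewrite mulrAC ler_pdivlMr //.
have := ler_wpM2r (ltW nv) Dw.
have E : r / `|v| * `|D v| * `|v| = `|D v| * r by field; rewrite gt_eqF.
by rewrite E.
Qed.

Lemma grad_lip (R : realType) (X : normedModType R) (ip : X -> X -> R) :
  hilbert_inner ip -> forall (f : X -> R) (g : X -> X) (L : R), 0 < L ->
  (forall x h, `|f (x + h) - f x - ip (g x) h| <= L / 2 * `|h| ^+ 2) ->
  forall x d, `|g (x + d) - g x| <= L * `|d|.
Proof.
move=> hip f g L L0 hb x d.
have [hs hl hn] := hip; have [hD hDr hZ hZr [hN hNr h0 h0r]] := ip_lin hip.
set y := x + d.
set G := g y - g x.
have gyE : g y = g x + G by rewrite /G addrC subrK.
pose al := (2 * L)^-1.
pose k := al *: G + 2^-1 *: d.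
have P1 : x + (d - k) = y + - k by rewrite addrA.
have P2 : y + (k - d) = x + k by rewrite /y addrACA subrr addr0.
have B1 := hb x (d - k); have B2 := hb y (- k).
have B3 := hb y (k - d); have B4 := hb x k.
rewrite P1 in B1; rewrite P2 in B3.
rewrite gyE in B2 B3.
move: B1 B2 B3 B4; rewrite -!hn !ler_norml.
rewrite /k !(hD, hDr, hN, hNr, hZ, hZr).
rewrite ?(hs d (g x)) ?(hs (g y) (g x)) ?(hs d (g y)).
move=> /andP[B1 B1'] /andP[B2 B2'] /andP[B3 B3'] /andP[B4 B4'].
set G2 := ip (g y) (g y) - 2 * ip (g x) (g y) + ip (g x) (g x).
have H : 2 * al * G2 <= L * (ip d d / 2 + 2 * al ^+ 2 * G2).
  rewrite /G2; lra.
have Ln : L != 0 by rewrite gt_eqF.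
have E : L * (2 * al ^+ 2 * G2) = al * G2 by rewrite /al; field.
have H2' : al * G2 <= L * ip d d / 2 by lra.
have H2 : G2 <= L ^+ 2 * ip d d.
  have al0 : 0 <= 2 * L by rewrite mulr_ge0 // ltW.
  have := ler_wpM2l al0 H2'.
  have -> : 2 * L * (al * G2) = G2 by rewrite /al; field.
  by have -> : 2 * L * (L * ip d d / 2) = L ^+ 2 * ip d d by field.
have EG : `|g y - g x| ^+ 2 = G2.
  by rewrite -hn !(hD, hDr, hN, hNr) ?(hs (g y) (g x)) /G2; ring.
rewrite hn -EG in H2.
rewrite -/G in H2 *.
have := normr_ge0 G; have := normr_ge0 d.
case: (lerP `|G| (L * `|d|)) => // hlt _ _.
have := mulr_ge0 (ltW L0) (normr_ge0 d).
nra.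
Qed.

Lemma two_point (R : realType) (X Y : normedModType R) (F : X -> Y) (L : R)
  (hconv : forall (n : nat) (x : 'I_n.+1 -> X) (lam : 'I_n.+1 -> R),
      (forall i, 0 <= lam i) -> \sum_i lam i = 1 ->
      `|F (\sum_i lam i *: x i) - \sum_i lam i *: F (x i)|
        <= L / 2 * \sum_(i < n.+1) \sum_(j < n.+1 | (i < j)%N)
                     lam i * lam j * `|x i - x j| ^+ 2)
  (ys : Y -> R) : dual_elt ys -> dual_norm_le1 ys ->
  forall (p q : X) (lam : R), 0 <= lam <= 1 ->
     `|ys (F (lam *: p + (1 - lam) *: q)) - (lam * ys (F p) + (1 - lam) * ys (F q))|
       <= L / 2 * (lam * (1 - lam) * `|p - q| ^+ 2).
Proof.
move=> [ysl _] ysn p q lam /andP[l0 l1].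
have ys0 : ys 0 = 0.
  have := ysl 1 0 0; rewrite scale1r addr0 mul1r => h.
  by apply: (@addrI _ (ys 0)); rewrite addr0 -h.
have ysD u v : ys (u + v) = ys u + ys v by rewrite -[u]scale1r ysl mul1r scale1r.
have ysZ a u : ys (a *: u) = a * ys u by rewrite -[a *: u]addr0 ysl ys0 addr0.
have ysN u : ys (- u) = - ys u by rewrite -scaleN1r ysZ mulN1r.
pose xx := fun i : 'I_2 => if i == ord0 then p else q.
pose ll := fun i : 'I_2 => if i == ord0 then lam else 1 - lam.
have := hconv 1%N xx ll.
have hpos : forall i, 0 <= ll i by move=> i; rewrite /ll; case: ifP => _ //; lra.
have hsum : \sum_i ll i = 1 by rewrite big_ord_recl big_ord1 /ll /=; lra.
move=> /(_ hpos hsum).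
rewrite !big_ord_recl !big_ord0 !addr0 /xx /ll /=.
rewrite !big_mkcond !big_ord_recl !big_ord0 /=.
rewrite !big_mkcond !big_ord_recl !big_ord0 /=.
rewrite !add0r !addr0 => H.
apply: le_trans H.
have -> : ys (F (lam *: p + (1 - lam) *: q)) - (lam * ys (F p) + (1 - lam) * ys (F q))
  = ys (F (lam *: p + (1 - lam) *: q) - (lam *: F p + (1 - lam) *: F q)).
  by rewrite ysD ysN ysD !ysZ.
exact: ysn.
Qed.

Unset Implicit Arguments.
Theorem lemma2p2 (R : realType) (X Y : completeNormedModType R)
  (ip : X -> X -> R) (hip : hilbert_inner ip)
  (F : X -> Y) (hF : continuous F) (L : R) (hL : 0 < L)
  (hconv : forall (n : nat) (x : 'I_n.+1 -> X) (lam : 'I_n.+1 -> R),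
      (forall i, 0 <= lam i) -> \sum_i lam i = 1 ->
      `|F (\sum_i lam i *: x i) - \sum_i lam i *: F (x i)|
        <= L / 2 * \sum_(i < n.+1) \sum_(j < n.+1 | (i < j)%N)
                     lam i * lam j * `|x i - x j| ^+ 2) :
  forall ys : Y -> R, dual_elt ys -> dual_norm_le1 ys ->
    exists grad : X -> X,
      (forall x, differentiable (ys \o F) x /\
                 forall h, 'd (ys \o F) x h = ip (grad x) h) /\
      (forall x1 x2, `|grad x1 - grad x2| <= L * `|x1 - x2|).
Proof.
move=> ys hys hyn.
have hc := two_point hconv hys hyn.
have fc : continuous (ys \o F).
  by move=> x; apply: continuous_comp; [exact: hF | exact: hys.2].
have ex : forall x, exists g : X, forall h,
    `|(ys \o F) (x + h) - (ys \o F) x - ip g h| <= L / 2 * `|h| ^+ 2.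
  move=> x.
  have [l [ll [M [M0 lM]] lq]] := deriv_exists (ltW hL) (fc x) hc.
  have [u hu] := riesz hip M0 ll lM.
  by exists u => h; rewrite hu.
have [grad hg] := boolp.choice ex.
exists grad; split.
  move=> x; have [hD hDr hZ hZr _] := ip_lin hip.
  apply: (@diff_quad _ _ _ _ _ (L / 2) `|grad x|) => //.
  - by rewrite divr_ge0 // ltW.
  - by move=> a u v; rewrite hDr hZr.
  - by move=> v; apply: ip_cs.
move=> x1 x2; have := grad_lip hip hL hg x2 (x1 - x2).
by have -> : x2 + (x1 - x2) = x1 by rewrite addrC subrK.
Qed.
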